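(* Let $s,t,r\in\mathbb{N}$ with $s\leqslant rt$ and $r\leqslant st$. The Lie group $U(r)$ acts smoothly, freely and properly on the manifold $V_{s,t,r}$ by $U\cdot V=(U\otimes I)V$, where $U\in U(r)$, $V\in V_{s,t,r}$ and $I$ is the $t\times t$ identity matrix (in particular, $U\cdot V\in V_{s,t,r}$).
   Context: $V_{s,t,r}$ is the set of $V=[A_1;\dots;A_r]\in\mathbb{C}^{rt\times s}$ (vertical stacking of blocks $A_i\in\mathbb{C}^{t\times s}$) with $V^{\ast}V=I$ and $A_1,\dots,A_r$ linearly independent over $\mathbb{C}$; it is a smooth embedded (open) submanifold of the Stiefel manifold $\{V\in\mathbb{C}^{rt\times s}:V^{\ast}V=I\}$. An action is free if $g\cdot p=p$ implies $g$ is the identity, and proper if $(g,p)\mapsto(g\cdot p,p)$ is a proper map. *)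

(* Defs.v *)
(* Complex numbers are R[i] (mathcomp
   real_closed's [complex R]) for an arbitrary [R : realType]; topology and
   smoothness are transported to the underlying real coordinates
   (real part, imaginary part), which are finite-dimensional real normed
   spaces of real matrices. *)
From HB Require Import structures.
From mathcomp Require Import all_boot all_algebra.
From mathcomp Require Import all_classical all_reals all_analysis.
From mathcomp Require Import complex.
Set Implicit Arguments. Unset Strict Implicit. Unset Printing Implicit Defensive.
Import GRing.Theory Num.Theory numFieldNormedType.Exports.
Local Open Scope ring_scope.
Local Open Scope classical_set_scope.

Section Defs.
Variable R : realType.
Local Notation C := (R[i]).

Definition adj m n (A : 'M[C]_(m, n)) : 'M[C]_(n, m) :=
  (map_mx (fun z => Num.conj z) A)^T.

Definition unitary r (U : 'M[C]_r) : Prop := adj U *m U = 1%:M.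

(* index bookkeeping for the vertical stacking [A_1; ...; A_r] of t x s blocks:
   row (i, j) of block i has global row index i * t + j *)
Lemma blk_idx_lt r t (i : 'I_r) (j : 'I_t) : (i * t + j < r * t)%N.
Proof.
case: i j => i Hi [j Hj] /=.
apply: (@leq_trans (i.+1 * t)); first by rewrite mulSn addnC ltn_add2r.
by rewrite leq_mul2r Hi orbT.
Qed.
Definition blk_idx r t (i : 'I_r) (j : 'I_t) : 'I_(r * t) := Ordinal (blk_idx_lt i j).

Lemma blk_q_lt r t (a : 'I_(r * t)) : (a %/ t < r)%N.
Proof.
case: a => a Ha /=; case: t Ha => [|t] Ha; first by rewrite muln0 in Ha.
by rewrite ltn_divLR.
Qed.
Lemma blk_r_lt r t (a : 'I_(r * t)) : (a %% t < t)%N.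
Proof.
case: a => a Ha /=; case: t Ha => [|t] Ha; first by rewrite muln0 in Ha.
by rewrite ltn_mod.
Qed.
Definition blk_q r t (a : 'I_(r * t)) : 'I_r := Ordinal (blk_q_lt a).
Definition blk_r r t (a : 'I_(r * t)) : 'I_t := Ordinal (blk_r_lt a).

Definition block r t s (V : 'M[C]_(r * t, s)) (i : 'I_r) : 'M[C]_(t, s) :=
  \matrix_(j < t, k < s) V (blk_idx i j) k.

Definition blocks_lin_indep r t s (V : 'M[C]_(r * t, s)) : Prop :=
  forall c : 'I_r -> C, \sum_(i < r) c i *: block V i = 0 -> forall i, c i = 0.

Definition Vstr s t r (V : 'M[C]_(r * t, s)) : Prop :=
  adj V *m V = 1%:M /\ blocks_lin_indep V.

(* Kronecker product U (x) I_t, rows/columns indexed as (i, j) |-> i * t + j *)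
Definition kronI r t (U : 'M[C]_r) : 'M[C]_(r * t) :=
  \matrix_(a, b) (U (blk_q a) (blk_q b) * (blk_r a == blk_r b)%:R).

Definition act r t s (U : 'M[C]_r) (V : 'M[C]_(r * t, s)) : 'M[C]_(r * t, s) :=
  kronI t U *m V.

Definition rmx m n (A : 'M[C]_(m, n)) : 'M[R]_(m, n) * 'M[R]_(m, n) :=
  (map_mx (@complex.Re R) A, map_mx (@complex.Im R) A).

(* C^k / C^oo on a set W of a real normed space: Frechet differentiable at
   every point of W, and so are all iterated directional derivatives *)
Fixpoint smooth_on_k (E F : normedModType R) (k : nat) (W : set E) (G : E -> F)
  : Prop :=
  match k with
  | 0 => forall x, W x -> differentiable G x
  | k'.+1 => (forall x, W x -> differentiable G x) /\
             forall v : E, smooth_on_k k' W (fun x => derive G x v)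
  end.
Definition smooth_on (E F : normedModType R) (W : set E) (G : E -> F) : Prop :=
  forall k, smooth_on_k k W G.

End Defs.

(* Main.v *)
Require Import Defs.
From HB Require Import structures.
From mathcomp Require Import all_boot all_algebra.
From mathcomp Require Import all_classical all_reals all_analysis.
From mathcomp Require Import complex.
From mathcomp Require Import ring lra.
Import GRing.Theory Num.Theory numFieldNormedType.Exports.
Local Open Scope ring_scope.
Local Open Scope classical_set_scope.
Set Implicit Arguments. Unset Strict Implicit. Unset Printing Implicit Defensive.
Lemma blk_qE r t (i : 'I_r) (j : 'I_t) : blk_q (blk_idx i j) = i.
Proof.
apply: val_inj => /=; case: j => j Hj /=.
by rewrite divnMDl ?(leq_ltn_trans _ Hj)// divn_small // addn0.
Qed.
Lemma blk_rE r t (i : 'I_r) (j : 'I_t) : blk_r (blk_idx i j) = j.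
Proof.
apply: val_inj => /=; case: j => j Hj /=.
by rewrite modnMDl modn_small.
Qed.
Lemma blk_idxK r t (a : 'I_(r * t)) : blk_idx (blk_q a) (blk_r a) = a.
Proof. by apply: val_inj => /=; rewrite -divn_eq. Qed.

Lemma sum_blk (V : nmodType) r t (F : 'I_(r * t) -> V) :
  \sum_(a < r * t) F a = \sum_(i < r) \sum_(j < t) F (blk_idx i j).
Proof.
rewrite pair_big /=.
rewrite (reindex (fun p : 'I_r * 'I_t => blk_idx p.1 p.2)) //=.
apply: onW_bij; exists (fun a => (blk_q a, blk_r a)) => [[i j]|a] /=.
  by rewrite blk_qE blk_rE.
by rewrite blk_idxK.
Qed.

Lemma blk_eq r t (a b : 'I_(r * t)) :
  (a == b) = (blk_q a == blk_q b) && (blk_r a == blk_r b).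
Proof.
apply/eqP/andP => [->|[/eqP ha /eqP hb]]; first by [].
by rewrite -(blk_idxK a) -(blk_idxK b) ha hb.
Qed.

Lemma kronIE (R : realType) r t (U : 'M[R[i]]_r) a b :
  kronI t U a b = U (blk_q a) (blk_q b) * (blk_r a == blk_r b)%:R.
Proof. by rewrite mxE. Qed.

Lemma kronI1 (R : realType) r t : kronI t (1%:M : 'M[R[i]]_r) = 1%:M.
Proof.
apply/matrixP => a b; rewrite !mxE blk_eq.
by case: (blk_q a == blk_q b); case: (blk_r a == blk_r b); rewrite /= ?mulr1 ?mulr0.
Qed.

Lemma kronIM (R : realType) r t (U1 U2 : 'M[R[i]]_r) :
  kronI t (U1 *m U2) = kronI t U1 *m kronI t U2.
Proof.
apply/matrixP => a b; rewrite !mxE sum_blk mulr_suml; apply: eq_bigr => k _.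
rewrite (bigD1 (blk_r a)) //= big1 => [|l /negbTE nl].
  rewrite !mxE !blk_qE !blk_rE eqxx addr0 mulr1.
  by rewrite mulrA.
by rewrite !mxE !blk_qE !blk_rE eq_sym nl mulr0 mul0r.
Qed.

Lemma adjM (R : realType) m n p (A : 'M[R[i]]_(m, n)) (B : 'M[R[i]]_(n, p)) :
  adj (A *m B) = adj B *m adj A.
Proof.
rewrite /adj -trmx_mul; congr (_^T).
by rewrite (map_mxM Num.conj).
Qed.

Lemma adj_kronI (R : realType) r t (U : 'M[R[i]]_r) :
  adj (kronI t U) = kronI t (adj U).
Proof.
apply/matrixP => a b; rewrite !mxE rmorphM rmorph_nat eq_sym.
by [].
Qed.

Lemma block_act (R : realType) r t s (U : 'M[R[i]]_r) (V : 'M[R[i]]_(r * t, s)) i :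
  block (act U V) i = \sum_(k < r) U i k *: block V k.
Proof.
apply/matrixP => j c; rewrite !mxE summxE sum_blk; apply: eq_bigr => k _.
rewrite (bigD1 j) //= big1 => [|l /negbTE nl].
  by rewrite !mxE !blk_qE !blk_rE eqxx addr0 mulr1.
by rewrite !mxE !blk_qE !blk_rE eq_sym nl mulr0 mul0r.
Qed.
Lemma sum_delta (R : realType) r t s (V : 'M[R[i]]_(r * t, s)) i :
  \sum_(k < r) (1%:M : 'M[R[i]]_r) i k *: block V k = block V i.
Proof.
rewrite (bigD1 i) //= big1 => [|k /negbTE nk]; first by rewrite mxE eqxx scale1r addr0.
by rewrite mxE eq_sym nk scale0r.
Qed.

Lemma part1 (R : realType) r t s (U : 'M[R[i]]_r) (V : 'M[R[i]]_(r * t, s)) :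
  unitary U -> Vstr V -> Vstr (act U V).
Proof.
move=> hU [hV hI]; split.
  rewrite /act adjM adj_kronI -mulmxA (mulmxA (kronI t (adj U))) -kronIM hU.
  by rewrite kronI1 mul1mx.
move=> c hc.
have hd : forall k, \sum_(i < r) c i * U i k = 0.
  apply: hI; rewrite -{}[RHS]hc; apply/esym.
  under eq_bigr do rewrite block_act scaler_sumr.
  rewrite exchange_big /=; apply: eq_bigr => k _.
  by rewrite scaler_suml; apply: eq_bigr => i _; rewrite scalerA.
have hU' : U *m adj U = 1%:M by apply: mulmx1C.
pose cv := \row_i c i.
have h0 : cv *m U = 0 by apply/rowP => k; rewrite !mxE; under eq_bigr do rewrite mxE; exact: hd.
move=> j; have : cv *m (U *m adj U) = cv by rewrite hU' mulmx1.
by rewrite mulmxA h0 mul0mx => /rowP /(_ j); rewrite !mxE.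
Qed.

Lemma part2 (R : realType) r t s (V : 'M[R[i]]_(r * t, s)) : act 1%:M V = V.
Proof. by rewrite /act kronI1 mul1mx. Qed.

Lemma part3 (R : realType) r t s (U1 U2 : 'M[R[i]]_r) (V : 'M[R[i]]_(r * t, s)) :
  act (U1 *m U2) V = act U1 (act U2 V).
Proof. by rewrite /act kronIM mulmxA. Qed.

Lemma part5 (R : realType) r t s (U : 'M[R[i]]_r) (V : 'M[R[i]]_(r * t, s)) :
  Vstr V -> act U V = V -> U = 1%:M.
Proof.
move=> [_ hI] hUV; apply/matrixP => i k.
have := hI (fun k => U i k - (1%:M : 'M[R[i]]_r) i k).
move=> H; apply/eqP; rewrite -subr_eq0; apply/eqP; apply: H.
under eq_bigr do rewrite scalerBl.
by rewrite sumrB -block_act hUV sum_delta subrr.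
Qed.
Fixpoint Poly (R : realType) (E F : normedModType R) (d : nat) (f : E -> F) : Prop :=
  match d with
  | 0 => exists c, f = cst c
  | d'.+1 => (forall x, differentiable f x) /\ forall v, Poly d' (fun x => 'D_v f x)
  end.

Lemma Poly_ext (R : realType) (E F : normedModType R) d (f g : E -> F) :
  (forall x, f x = g x) -> Poly d g -> Poly d f.
Proof. by move=> /funext ->. Qed.

Lemma Poly_cst (R : realType) (E F : normedModType R) d (c : F) :
  Poly d (cst c : E -> F).
Proof.
elim: d c => [|d IH] c /=; first by exists c.
split=> [x|v]; first exact: differentiable_cst.
apply: (Poly_ext (g := cst 0)) => // x; exact: derive_cst.
Qed.

Lemma Poly_diff (R : realType) (E F : normedModType R) d (f : E -> F) :
  Poly d f -> forall x, differentiable f x.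
Proof. by case: d => [[c ->] x|d [] //]; exact: differentiable_cst. Qed.

Lemma Poly_S (R : realType) (E F : normedModType R) d (f : E -> F) :
  Poly d f -> Poly d.+1 f.
Proof.
elim: d f => [|d IH] f; first by move=> [c ->]; exact: Poly_cst.
by move=> /= [hd hD]; split => // v; apply: IH.
Qed.

Lemma Poly_le (R : realType) (E F : normedModType R) d e (f : E -> F) :
  (d <= e)%N -> Poly d f -> Poly e f.
Proof.
elim: e => [|e IH]; first by rewrite leqn0 => /eqP ->.
rewrite leq_eqVlt => /orP[/eqP -> //|]; rewrite ltnS => hle H.
by apply: Poly_S; apply: IH.
Qed.

Lemma Poly_smooth (R : realType) (E F : normedModType R) d (f : E -> F) :
  Poly d f -> smooth_on setT f.
Proof.
move=> Hf k; elim: k d f Hf => [|k IH] d f Hf /=.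
  by move=> x _; exact: Poly_diff Hf x.
split; first by move=> x _; exact: Poly_diff Hf x.
by move=> v; have [_ /(_ v) H] := Poly_S Hf; apply: IH H.
Qed.

Lemma PolyD (R : realType) (E F : normedModType R) d (f g : E -> F) :
  Poly d f -> Poly d g -> Poly d (fun x => f x + g x).
Proof.
elim: d f g => [|d IH] f g /=.
  by move=> [a ->] [b ->]; exists (a + b).
move=> [df Df] [dg Dg]; split=> [x|v]; first exact: differentiableD.
apply: (Poly_ext (g := fun x => 'D_v f x + 'D_v g x)); last exact: IH.
move=> x; have -> : (fun x => f x + g x) = f + g by [].
by rewrite deriveD //; apply: diff_derivable.
Qed.

Lemma PolyN (R : realType) (E F : normedModType R) d (f : E -> F) :
  Poly d f -> Poly d (fun x => - f x).
Proof.
elim: d f => [|d IH] f /=.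
  by move=> [a ->]; exists (- a).
move=> [df Df]; split=> [x|v]; first exact: differentiableN.
apply: (Poly_ext (g := fun x => - 'D_v f x)); last exact: IH.
move=> x; have -> : (fun x => - f x) = - f by [].
by rewrite deriveN //; apply: diff_derivable.
Qed.

Lemma Poly_sum (R : realType) (E F : normedModType R) d n (f : 'I_n -> E -> F) :
  (forall i, Poly d (f i)) -> Poly d (fun x => \sum_(i < n) f i x).
Proof.
elim: n f => [|n IH] f H.
  by apply: (Poly_ext (g := cst 0)) => [x|]; [rewrite big_ord0|exact: Poly_cst].
apply: (Poly_ext (g := fun x => \sum_(i < n) f (widen_ord (leqnSn n) i) x + f ord_max x)).
  by move=> x; rewrite big_ord_recr.
apply: PolyD => //; apply: (IH (fun i => f (widen_ord (leqnSn n) i))) => i; exact: H.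
Qed.

Lemma PolyZl (R : realType) (E F : normedModType R) d (k : E -> R) (w : F) :
  Poly d k -> Poly d (fun x => k x *: w).
Proof.
elim: d k => [|d IH] k /=.
  by move=> [a ->]; exists (a *: w).
move=> [dk Dk]; split=> [x|v]; first exact: differentiableZl.
apply: (Poly_ext (g := fun x => 'D_v k x *: w)); last exact: IH.
move=> x; rewrite deriveE; last exact: differentiableZl.
by rewrite diffZl // deriveE.
Qed.

Lemma PolyZ (R : realType) (E F : normedModType R) d (c : R) (f : E -> F) :
  Poly d f -> Poly d (fun x => c *: f x).
Proof.
elim: d f => [|d IH] f /=.
  by move=> [a ->]; exists (c *: a).
move=> [df Df]; split=> [x|v]; first exact: differentiableZ.
apply: (Poly_ext (g := fun x => c *: 'D_v f x)); last exact: IH.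
move=> x; have -> : (fun x => c *: f x) = c *: f by [].
by rewrite deriveZ //; apply: diff_derivable.
Qed.

Lemma PolyM (R : realType) (E : normedModType R) n d e (f g : E -> R) :
  (d + e <= n)%N -> Poly d f -> Poly e g -> Poly n (fun x => f x * g x).
Proof.
elim: n d e f g => [|n IH] d e f g.
  rewrite leqn0 addn_eq0 => /andP[/eqP -> /eqP ->] [a ->] [b ->] /=.
  by exists (a * b).
case: d => [|d].
  move=> hle [a ->] Hg; apply: (Poly_le hle).
  exact: (PolyZ a Hg).
case: e => [|e].
  move=> hle Hf [b ->]; rewrite addn0 in hle; apply: (Poly_le hle).
  apply: (Poly_ext (g := fun x => b *: f x)); last exact: PolyZ.
  by move=> x; rewrite /= mulrC.
move=> hle Hf Hg; have [df Df] := Hf; have [dg Dg] := Hg; split=> [x|v].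
  exact: (differentiableM (df x) (dg x)).
apply: (Poly_ext (g := fun x => f x * 'D_v g x + g x * 'D_v f x)).
  move=> x; have -> : (fun x => f x * g x) = f * g by [].
  by rewrite deriveM //; apply: diff_derivable.
apply: PolyD.
  apply: (IH d.+1 e) => //; last exact: Dg.
  by rewrite addnS ltnS in hle.
apply: (IH e.+1 d) => //; last exact: Df.
by rewrite addnC addnS ltnS in hle.
Qed.

Lemma Poly_pair (R : realType) (E F1 F2 : normedModType R) d (f : E -> F1) (g : E -> F2) :
  Poly d f -> Poly d g -> Poly d (fun x => (f x, g x)).
Proof.
elim: d f g => [|d IH] f g /=.
  by move=> [a ->] [b ->]; exists (a, b).
move=> [df Df] [dg Dg]; split=> [x|v]; first exact: differentiable_pair.
apply: (Poly_ext (g := fun x => ('D_v f x, 'D_v g x))); last exact: IH.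
move=> x; rewrite deriveE; last exact: differentiable_pair.
by rewrite diff_pair // !deriveE.
Qed.

Lemma Poly_lin (R : realType) (E F : normedModType R) (f : E -> F) :
  linear f -> continuous f -> Poly 1 f.
Proof.
move=> lf cf.
pose fL : {linear E -> F} := HB.pack f (GRing.isLinear.Build _ _ _ _ _ lf).
have dfx : forall x, differentiable f x by move=> x; exact: (@linear_differentiable _ _ _ fL).
split=> // v; exists (f v); apply/funext => x.
by rewrite deriveE // (@diff_lin _ _ _ fL).
Qed.

Lemma Poly_mx (R : realType) (E : normedModType R) d m n (h : E -> 'I_m -> 'I_n -> R) :
  (forall i j, Poly d (fun x => h x i j)) -> Poly d (fun x => \matrix_(i, j) h x i j).
Proof.
move=> H.
apply: (Poly_ext (g := fun x => \sum_(i < m) \sum_(j < n) h x i j *: delta_mx i j)).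
  by move=> x; rewrite [LHS]matrix_sum_delta; apply: eq_bigr => i _; apply: eq_bigr => j _; rewrite mxE.
apply: Poly_sum => i; apply: Poly_sum => j; exact: PolyZl.
Qed.
Lemma fst_cont (R : realType) (A B : normedModType R) : continuous (fun p : A * B => p.1).
Proof. move=> p; exact: cvg_fst. Qed.
Lemma snd_cont (R : realType) (A B : normedModType R) : continuous (fun p : A * B => p.2).
Proof. move=> p; exact: cvg_snd. Qed.

Lemma ReM (R : realType) (x y : R[i]) :
  complex.Re (x * y) = complex.Re x * complex.Re y - complex.Im x * complex.Im y.
Proof. by case: x => a b; case: y => c d; simpl. Qed.
Lemma ImM (R : realType) (x y : R[i]) :
  complex.Im (x * y) = complex.Re x * complex.Im y + complex.Im x * complex.Re y.
Proof. by case: x => a b; case: y => c d; simpl. Qed.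
Lemma ReD (R : realType) (x y : R[i]) : complex.Re (x + y) = complex.Re x + complex.Re y.
Proof. by case: x => a b; case: y => c d; simpl. Qed.
Lemma ImD (R : realType) (x y : R[i]) : complex.Im (x + y) = complex.Im x + complex.Im y.
Proof. by case: x => a b; case: y => c d; simpl. Qed.
Lemma Re0 (R : realType) : complex.Re (0 : R[i]) = 0. Proof. by []. Qed.
Lemma Im0 (R : realType) : complex.Im (0 : R[i]) = 0. Proof. by []. Qed.
Lemma Re_sum (R : realType) n (F : 'I_n -> R[i]) :
  complex.Re (\sum_(i < n) F i) = \sum_(i < n) complex.Re (F i).
Proof. by elim/big_ind2: _ => // x a y b <- <-; exact: ReD. Qed.
Lemma Im_sum (R : realType) n (F : 'I_n -> R[i]) :
  complex.Im (\sum_(i < n) F i) = \sum_(i < n) complex.Im (F i).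
Proof. by elim/big_ind2: _ => // x a y b <- <-; exact: ImD. Qed.

Lemma Poly_compL (R : realType) (E1 E F : normedModType R) d (L : E1 -> E) (f : E -> F) :
  linear L -> continuous L -> Poly d f -> Poly d (fun x => f (L x)).
Proof.
move=> lL cL.
pose LL : {linear E1 -> E} := HB.pack L (GRing.isLinear.Build _ _ _ _ _ lL).
have dL : forall x, differentiable L x by move=> x; exact: (@linear_differentiable _ _ _ LL).
have dLE : forall x, 'd L x = L :> (E1 -> E) by move=> x; exact: (@diff_lin _ _ _ LL).
elim: d f => [|d IH] f /=; first by move=> [c ->]; exists c.
move=> [df Df]; have dfL : forall x, differentiable (fun x => f (L x)) x.
  by move=> x; exact: (differentiable_comp (dL x) (df (L x))).
split=> // v.
apply: (@Poly_ext R E1 F d _ (fun x => derive f (L x) (L v))); last exact: (IH (fun y => derive f y (L v))).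
move=> x; rewrite deriveE // deriveE //.
have -> : (fun x => f (L x)) = f \o L by [].
by rewrite diff_comp // /= dLE.
Qed.

Lemma Poly_coord (R : realType) m n (i : 'I_m) (j : 'I_n) :
  Poly 1 (fun M : 'M[R]_(m, n) => M i j).
Proof.
apply: Poly_lin; last exact: coord_continuous.
by move=> a x y; rewrite !mxE.
Qed.

Lemma Poly_fst (R : realType) (A B F : normedModType R) d (f : A -> F) :
  Poly d f -> Poly d (fun p : A * B => f p.1).
Proof. by apply: Poly_compL => //; exact: fst_cont. Qed.
Lemma Poly_snd (R : realType) (A B F : normedModType R) d (f : B -> F) :
  Poly d f -> Poly d (fun p : A * B => f p.2).
Proof. by apply: Poly_compL => //; exact: snd_cont. Qed.

Definition CP (R : realType) (E : normedModType R) d (h : E -> R[i]) :=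
  Poly d (fun x => complex.Re (h x)) /\ Poly d (fun x => complex.Im (h x)).

Lemma CP_cst (R : realType) (E : normedModType R) d (c : R[i]) : CP d (fun _ : E => c).
Proof. by split; apply: Poly_cst. Qed.

Lemma CP_mk (R : realType) (E : normedModType R) d (a b : E -> R) :
  Poly d a -> Poly d b -> CP d (fun x => Complex (a x) (b x)).
Proof. by []. Qed.

Lemma CPD (R : realType) (E : normedModType R) d (f g : E -> R[i]) :
  CP d f -> CP d g -> CP d (fun x => f x + g x).
Proof.
move=> [f1 f2] [g1 g2]; split.
  by apply: (Poly_ext (g := fun x => complex.Re (f x) + complex.Re (g x))) => [x|]; [exact: ReD|exact: PolyD].
by apply: (Poly_ext (g := fun x => complex.Im (f x) + complex.Im (g x))) => [x|]; [exact: ImD|exact: PolyD].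
Qed.

Lemma CPM (R : realType) (E : normedModType R) n d e (f g : E -> R[i]) :
  (d + e <= n)%N -> CP d f -> CP e g -> CP n (fun x => f x * g x).
Proof.
move=> hle [f1 f2] [g1 g2]; split.
  apply: (Poly_ext (g := fun x => complex.Re (f x) * complex.Re (g x) + - (complex.Im (f x) * complex.Im (g x)))) => [x|]; first exact: ReM.
  by apply: PolyD; [|apply: PolyN]; apply: PolyM hle _ _.
apply: (Poly_ext (g := fun x => complex.Re (f x) * complex.Im (g x) + (complex.Im (f x) * complex.Re (g x)))) => [x|]; first exact: ImM.
by apply: PolyD; apply: PolyM hle _ _.
Qed.

Lemma CP_sum (R : realType) (E : normedModType R) d n (f : 'I_n -> E -> R[i]) :
  (forall i, CP d (f i)) -> CP d (fun x => \sum_(i < n) f i x).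
Proof.
move=> H; split.
  apply: (Poly_ext (g := fun x => \sum_(i < n) complex.Re (f i x))) => [x|]; first exact: Re_sum.
  by apply: Poly_sum => i; case: (H i).
apply: (Poly_ext (g := fun x => \sum_(i < n) complex.Im (f i x))) => [x|]; first exact: Im_sum.
by apply: Poly_sum => i; case: (H i).
Qed.

Lemma CP_conj (R : realType) (E : normedModType R) d (f : E -> R[i]) :
  CP d f -> CP d (fun x => Num.conj (f x)).
Proof.
move=> [f1 f2]; split.
  by apply: (Poly_ext (g := fun x => complex.Re (f x))) => // x; case: (f x).
by apply: (Poly_ext (g := fun x => - complex.Im (f x))) => [x|]; [case: (f x)|exact: PolyN].
Qed.

Lemma CP_rmx (R : realType) (E : normedModType R) d m n (H : E -> 'M[R[i]]_(m, n)) :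
  (forall i j, CP d (fun x => H x i j)) -> Poly d (fun x => rmx (H x)).
Proof.
move=> HH; apply: (Poly_ext (g := fun x => (\matrix_(i, j) complex.Re (H x i j), \matrix_(i, j) complex.Im (H x i j)))) => [x|]; first by congr (_, _); apply/matrixP => i j; rewrite !mxE.
by apply: Poly_pair; apply: Poly_mx => i j; case: (HH i j).
Qed.
Definition cmx (R : realType) m n (x : 'M[R]_(m, n) * 'M[R]_(m, n)) : 'M[R[i]]_(m, n) :=
  \matrix_(i, j) Complex (x.1 i j) (x.2 i j).

Lemma rmxK (R : realType) m n (A : 'M[R[i]]_(m, n)) : cmx (rmx A) = A.
Proof. by apply/matrixP => i j; rewrite !mxE; case: (A i j). Qed.

Lemma cmxK (R : realType) m n (x : 'M[R]_(m, n) * 'M[R]_(m, n)) : rmx (cmx x) = x.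
Proof. by case: x => a b; congr (_, _); apply/matrixP => i j; rewrite !mxE. Qed.

Lemma rmx_inj (R : realType) m n : injective (@rmx R m n).
Proof. by move=> A B hAB; rewrite -(rmxK A) hAB rmxK. Qed.

Lemma Poly_cont (R : realType) (E F : normedModType R) d (f : E -> F) :
  Poly d f -> continuous f.
Proof. by move=> H x; apply: differentiable_continuous; exact: Poly_diff H x. Qed.

Lemma CP_cmx1 (R : realType) (B : normedModType R) m n (i : 'I_m) (j : 'I_n) :
  CP 1 (fun p : ('M[R]_(m, n) * 'M[R]_(m, n)) * B => cmx p.1 i j).
Proof.
have -> : (fun p : ('M[R]_(m, n) * 'M[R]_(m, n)) * B => cmx p.1 i j) =
   (fun p => Complex (p.1.1 i j) (p.1.2 i j)) by apply/funext => p; rewrite mxE.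
apply: CP_mk.
  exact: (Poly_fst B (Poly_fst 'M[R]_(m, n) (Poly_coord R i j))).
exact: (Poly_fst B (Poly_snd 'M[R]_(m, n) (Poly_coord R i j))).
Qed.

Lemma CP_cmx2 (R : realType) (B : normedModType R) m n (i : 'I_m) (j : 'I_n) :
  CP 1 (fun p : B * ('M[R]_(m, n) * 'M[R]_(m, n)) => cmx p.2 i j).
Proof.
have -> : (fun p : B * ('M[R]_(m, n) * 'M[R]_(m, n)) => cmx p.2 i j) =
   (fun p => Complex (p.2.1 i j) (p.2.2 i j)) by apply/funext => p; rewrite mxE.
apply: CP_mk.
  exact: (Poly_snd B (Poly_fst 'M[R]_(m, n) (Poly_coord R i j))).
exact: (Poly_snd B (Poly_snd 'M[R]_(m, n) (Poly_coord R i j))).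
Qed.

Definition Gfun (R : realType) r t s
  (p : ('M[R]_r * 'M[R]_r) * ('M[R]_(r * t, s) * 'M[R]_(r * t, s))) :=
  rmx (act (cmx p.1) (cmx p.2)).

Lemma Poly_Gfun (R : realType) r t s : Poly 2 (@Gfun R r t s).
Proof.
apply: CP_rmx => a c.
have -> : (fun p : ('M[R]_r * 'M[R]_r) * ('M[R]_(r * t, s) * 'M[R]_(r * t, s)) =>
    act (cmx p.1) (cmx p.2) a c) =
  (fun p => \sum_b (cmx p.1 (blk_q a) (blk_q b) * (blk_r a == blk_r b)%:R) * cmx p.2 b c).
  by apply/funext => p; rewrite !mxE; apply: eq_bigr => b _; rewrite mxE.
apply: CP_sum => b; apply: (CPM (d := 1) (e := 1)) => //; last exact: CP_cmx2.
by apply: (CPM (d := 1) (e := 0)) => //; [exact: CP_cmx1|exact: CP_cst].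
Qed.

Lemma part4 (R : realType) r t s (U0 : 'M[R[i]]_r) (V0 : 'M[R[i]]_(r * t, s)) :
      exists (W : set (('M[R]_r * 'M[R]_r) *
                       ('M[R]_(r * t, s) * 'M[R]_(r * t, s)))%type)
             (G : (('M[R]_r * 'M[R]_r) *
                   ('M[R]_(r * t, s) * 'M[R]_(r * t, s)))%type ->
                  ('M[R]_(r * t, s) * 'M[R]_(r * t, s))%type),
        open W /\ W (rmx U0, rmx V0) /\ smooth_on W G /\
        forall (U : 'M[R[i]]_r) (V : 'M[R[i]]_(r * t, s)),
          unitary U -> Vstr V -> W (rmx U, rmx V) ->
          G (rmx U, rmx V) = rmx (act U V).
Proof.
exists setT, (@Gfun R r t s); split; first exact: openT.
split=> //; split; first exact: Poly_smooth (Poly_Gfun R r t s).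
by move=> U V _ _ _; rewrite /Gfun /= !rmxK.
Qed.
Definition Phi (R : realType) r (x : 'M[R]_r * 'M[R]_r) := rmx (adj (cmx x) *m cmx x).

Lemma CP_cmx0 (R : realType) m n (i : 'I_m) (j : 'I_n) :
  CP 1 (fun x : 'M[R]_(m, n) * 'M[R]_(m, n) => cmx x i j).
Proof.
have -> : (fun x : 'M[R]_(m, n) * 'M[R]_(m, n) => cmx x i j) =
   (fun x => Complex (x.1 i j) (x.2 i j)) by apply/funext => p; rewrite mxE.
apply: CP_mk.
  exact: (Poly_fst 'M[R]_(m, n) (Poly_coord R i j)).
exact: (Poly_snd 'M[R]_(m, n) (Poly_coord R i j)).
Qed.

Lemma Poly_Phi (R : realType) r : Poly 2 (@Phi R r).
Proof.
apply: CP_rmx => i j.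
have -> : (fun x : 'M[R]_r * 'M[R]_r => (adj (cmx x) *m cmx x) i j) =
  (fun x => \sum_k Num.conj (cmx x k i) * cmx x k j).
  by apply/funext => p; rewrite !mxE; apply: eq_bigr => b _; rewrite !mxE.
apply: CP_sum => k; apply: (CPM (d := 1) (e := 1)) => //; last exact: CP_cmx0.
by apply: CP_conj; exact: CP_cmx0.
Qed.

Definition Ureal (R : realType) r := [set x : 'M[R]_r * 'M[R]_r | unitary (cmx x)].

Lemma Ureal_closed (R : realType) r : closed (@Ureal R r).
Proof.
have -> : @Ureal R r = @Phi R r @^-1` [set rmx 1%:M].
  apply/seteqP; split => x /=.
    by rewrite /Phi => ->.
  by move/rmx_inj.
apply: preimage_closed.
  move=> x _; exact: (Poly_cont (Poly_Phi R r)).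
apply: compact_closed; [exact: norm_hausdorff|exact: compact_set1].
Qed.

Definition psi (R : realType) r (v : 'rV[R]_(r * r + r * r)) : 'M[R]_r * 'M[R]_r :=
  (vec_mx (lsubmx v), vec_mx (rsubmx v)).
Definition phi (R : realType) r (x : 'M[R]_r * 'M[R]_r) : 'rV[R]_(r * r + r * r) :=
  row_mx (mxvec x.1) (mxvec x.2).

Lemma psiK (R : realType) r (x : 'M[R]_r * 'M[R]_r) : psi (phi x) = x.
Proof. by case: x => a b; rewrite /psi /phi /= row_mxKl row_mxKr !mxvecK. Qed.
Lemma phiK (R : realType) r (v : 'rV[R]_(r * r + r * r)) : phi (psi v) = v.
Proof. by rewrite /psi /phi /= !vec_mxK hsubmxK. Qed.

Lemma psi_cont (R : realType) r : continuous (@psi R r).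
Proof.
apply: (@Poly_cont _ _ _ 1).
apply: (Poly_ext (g := fun v : 'rV[R]_(r * r + r * r) =>
  (\matrix_(i, j) v 0 (lshift _ (mxvec_index i j)), \matrix_(i, j) v 0 (rshift _ (mxvec_index i j))))).
  by move=> v; congr (_, _); apply/matrixP => i j; rewrite !mxE.
by apply: Poly_pair; apply: Poly_mx => i j; exact: Poly_coord.
Qed.

Lemma Re_conjM (R : realType) (z : R[i]) :
  complex.Re (Num.conj z * z) = complex.Re z ^+ 2 + complex.Im z ^+ 2.
Proof. case: z => a b; simpl; ring. Qed.

Lemma unitary_bound (R : realType) r (U : 'M[R[i]]_r) i j : unitary U ->
  `|complex.Re (U i j)| <= 1 /\ `|complex.Im (U i j)| <= 1.
Proof.
move=> hU.
have h := congr1 (fun M : 'M[R[i]]_r => complex.Re (M j j)) (hU : adj U *m U = 1%:M); move: h => /=.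
rewrite !mxE eqxx /= Re_sum.
under eq_bigr do rewrite !mxE Re_conjM.
rewrite (bigD1 i) //= => h.
have h0 : 0 <= \sum_(k < r | k != i) (complex.Re (U k j) ^+ 2 + complex.Im (U k j) ^+ 2).
  by apply: sumr_ge0 => k _; rewrite addr_ge0 // sqr_ge0.
set a := complex.Re (U i j) in h *; set b := complex.Im (U i j) in h *.
have hab : a ^+ 2 + b ^+ 2 <= 1 by rewrite -h lerDl.
rewrite !expr2 in hab.
by split; rewrite ler_norml; apply/andP; split; nra.
Qed.
Lemma Ureal_compact (R : realType) r : compact (@Ureal R r).
Proof.
pose S := [set v : 'rV[R]_(r * r + r * r) | Ureal (psi v)].
have -> : @Ureal R r = @psi R r @` S.
  apply/seteqP; split => [x hx|_ [v hv <-] //].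
  by exists (phi x); rewrite /S /= psiK.
apply: continuous_compact; first exact/continuous_subspaceT/psi_cont.
apply: bounded_closed_compact.
  rewrite /= /bounded_near; near=> M => v Sv.
  rewrite -(phiK v) /=; move: Sv; rewrite /S /=; set w := psi v => hw.
  rewrite [X in X <= _]/Num.Def.normr /= mx_normrE.
  apply: order.Order.POrderTheory.bigmax_le => [|[a k] _] /=.
    by near: M; apply: nbhs_pinfty_ge.
  apply: (@order.Order.POrderTheory.le_trans _ _ 1); last by near: M; apply: nbhs_pinfty_ge.
  rewrite (ord1 a) -(splitK k); case: (fintype.split k) => k1 /=.
    rewrite row_mxEl; case/mxvec_indexP: k1 => i j; rewrite mxvecE.
    have [+ _] := unitary_bound i j hw.
    by rewrite mxE.
  rewrite row_mxEr; case/mxvec_indexP: k1 => i j; rewrite mxvecE.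
  have [_ +] := unitary_bound i j hw.
  by rewrite mxE.
apply: preimage_closed; last exact: Ureal_closed.
by move=> x _; exact: psi_cont.
Unshelve. all: by end_near.
Qed.
Lemma part6 (R : realType) r t s
  (K : set ('M[R[i]]_(r * t, s) * 'M[R[i]]_(r * t, s))%type) :
      (forall p, K p -> Vstr p.1 /\ Vstr p.2) ->
      compact [set (rmx p.1, rmx p.2) | p in K] ->
      compact [set (rmx q.1, rmx q.2) |
               q in [set q : ('M[R[i]]_r * 'M[R[i]]_(r * t, s))%type |
                     unitary q.1 /\ Vstr q.2 /\ K (act q.1 q.2, q.2)]].
Proof.
move=> hK; set K' := [set (rmx p.1, rmx p.2) | p in K] => cK.
set Q := [set (rmx q.1, rmx q.2) | q in _].
have QE : Q = [set y | Ureal y.1 /\ K' (@Gfun R r t s y, y.2)].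
  apply/seteqP; split.
    move=> _ [q [hU [hV hKq]] <-] /=; split; first by rewrite /Ureal /= rmxK.
    by exists (act q.1 q.2, q.2) => //; rewrite /Gfun /= !rmxK.
  move=> [y1 y2] /= [hU [p hp hpe]].
  have e1 : p.1 = act (cmx y1) (cmx y2) by apply: rmx_inj; exact: (congr1 fst hpe).
  have e2 : p.2 = cmx y2 by apply: rmx_inj; rewrite cmxK; exact: (congr1 snd hpe).
  exists (cmx y1, cmx y2); last by rewrite /= !cmxK.
  split => //=; split; first by rewrite -e2; case: (hK p hp).
  by rewrite -e1 -e2 -surjective_pairing.
rewrite QE.
apply: (@subclosed_compact _ _ (Ureal (R:=R) (r:=r) `*` (snd @` K'))).
- apply: closedI.
    have := @preimage_closed _ _ (fun y : ('M[R]_r * 'M[R]_r) * ('M[R]_(r * t, s) * 'M[R]_(r * t, s)) => y.1) (@Ureal R r) (fun x _ => @fst_cont _ _ _ x) (@Ureal_closed R r).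
    exact.
  have cG : continuous (fun y => (@Gfun R r t s y, y.2)).
    apply: (@Poly_cont _ _ _ 2); apply: Poly_pair; first exact: Poly_Gfun.
    apply: (Poly_le (d := 1)) => //.
    apply: (Poly_snd _ (f := id)); apply: Poly_lin => // x; exact: cvg_id.
  have cK' : closed K' by apply: compact_closed => //; exact: norm_hausdorff.
  exact: (@preimage_closed _ _ (fun y => (@Gfun R r t s y, y.2)) K' (fun x _ => cG x) cK').
- apply: compact_setX; first exact: Ureal_compact.
  apply: continuous_compact => //; apply: continuous_subspaceT; exact: snd_cont.
- move=> y [hU hK']; split => //; exists (@Gfun R r t s y, y.2) => //.
Qed.

Unset Implicit Arguments.

Theorem proposition6 (R : realType) (s t r : nat)
    (hs : (s <= r * t)%N) (hr : (r <= s * t)%N) :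
  (* the action is well defined: U . V lies in V_{s,t,r} *)
  (forall (U : 'M[R[i]]_r) (V : 'M[R[i]]_(r * t, s)),
      unitary U -> Vstr V -> Vstr (act U V)) /\
  (* it is a (left) group action *)
  (forall V : 'M[R[i]]_(r * t, s), Vstr V -> act 1%:M V = V) /\
  (forall (U1 U2 : 'M[R[i]]_r) (V : 'M[R[i]]_(r * t, s)),
      unitary U1 -> unitary U2 -> Vstr V ->
      act (U1 *m U2) V = act U1 (act U2 V)) /\
  (* smooth: the action map U(r) x V_{s,t,r} -> V_{s,t,r} is locally the
     restriction of a C^oo map of the ambient (real) Euclidean spaces *)
  (forall (U0 : 'M[R[i]]_r) (V0 : 'M[R[i]]_(r * t, s)),
      unitary U0 -> Vstr V0 ->
      exists (W : set (('M[R]_r * 'M[R]_r) *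
                       ('M[R]_(r * t, s) * 'M[R]_(r * t, s)))%type)
             (G : (('M[R]_r * 'M[R]_r) *
                   ('M[R]_(r * t, s) * 'M[R]_(r * t, s)))%type ->
                  ('M[R]_(r * t, s) * 'M[R]_(r * t, s))%type),
        open W /\ W (rmx U0, rmx V0) /\ smooth_on W G /\
        forall (U : 'M[R[i]]_r) (V : 'M[R[i]]_(r * t, s)),
          unitary U -> Vstr V -> W (rmx U, rmx V) ->
          G (rmx U, rmx V) = rmx (act U V)) /\
  (* free *)
  (forall (U : 'M[R[i]]_r) (V : 'M[R[i]]_(r * t, s)),
      unitary U -> Vstr V -> act U V = V -> U = 1%:M) /\
  (* proper: preimages of compact subsets of V_{s,t,r} x V_{s,t,r} under
     (U, V) |-> (U . V, V) are compact in U(r) x V_{s,t,r} *)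
  (forall K : set ('M[R[i]]_(r * t, s) * 'M[R[i]]_(r * t, s))%type,
      (forall p, K p -> Vstr p.1 /\ Vstr p.2) ->
      compact [set (rmx p.1, rmx p.2) | p in K] ->
      compact [set (rmx q.1, rmx q.2) |
               q in [set q : ('M[R[i]]_r * 'M[R[i]]_(r * t, s))%type |
                     unitary q.1 /\ Vstr q.2 /\ K (act q.1 q.2, q.2)]]).
Proof.
split; first by move=> U V hU hV; exact: part1.
split; first by move=> V _; exact: part2.
split; first by move=> U1 U2 V _ _ _; exact: part3.
split; first by move=> U0 V0 _ _; exact: part4.
split; first by move=> U V _ hV; exact: part5.
exact: part6.
Qed.
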